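(* A strategy of the chair is regret-free if and only if it is efficient.
   Context: Let $\mathcal{X}$ be a finite set of alternatives. A proto-ranking is an irreflexive and transitive binary relation on $\mathcal{X}$; a ranking is a total proto-ranking; a tournament is a total and asymmetric binary relation on $\mathcal{X}$. The chair has a fixed preference $\succ$, which is a ranking on $\mathcal{X}$. Interaction: given a tournament $\mathrel{W}$, set $R_0=\varnothing$. In each period $t\geq 1$ in which $R_{t-1}$ is not total, the chair offers a pair $\{x,y\}$ of distinct alternatives unranked by $R_{t-1}$; the winner is $x$ if $x\mathrel{W}y$ and $y$ otherwise, and $R_t$ is the transitive closure of $R_{t-1}\cup\{(\text{winner},\text{loser})\}$. The process stops when $R_t$ is total. A history is a finite sequence of (winner, loser) pairs that can arise in this way; it is terminal if its induced proto-ranking is total. A strategy assigns to each non-terminal history a pair unranked at that history. The outcome of $\sigma$ under $\mathrel{W}$ is the final ranking. A ranking is $\mathrel{W}$-feasible if it is the outcome under $\mathrel{W}$ of some strategy. $R$ is more aligned with $\succ$ than $R'$ if for all $x\succ y$, $xR'y$ implies $xRy$. A ranking is $\mathrel{W}$-unimprovable if no other $\mathrel{W}$-feasible ranking is more aligned with $\succ$ than it. A strategy is regret-free if for every tournament $\mathrel{W}$ its outcome under $\mathrel{W}$ is $\mathrel{W}$-unimprovable. A ranking $R$ is $\mathrel{W}$-efficient if $x\succ y$ and $x\mathrel{W}y$ imply $xRy$; a strategy is efficient if for every tournament $\mathrel{W}$ its outcome under $\mathrel{W}$ is $\mathrel{W}$-efficient. *)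

(* Defs.v *)
From mathcomp Require Import all_boot.
Set Implicit Arguments. Unset Strict Implicit. Unset Printing Implicit Defensive.

Section Chair.
Variable X : finType.

Definition irreflexive_rel (R : rel X) := forall x, ~~ R x x.
Definition transitive_rel (R : rel X) := forall x y z, R x y -> R y z -> R x z.
Definition total_rel (R : rel X) := forall x y, x != y -> R x y || R y x.
Definition totalb (R : rel X) : bool :=
  [forall x, [forall y, (x != y) ==> (R x y || R y x)]].
Definition asymmetric_rel (R : rel X) := forall x y, R x y -> ~~ R y x.

Definition is_proto_ranking (R : rel X) := irreflexive_rel R /\ transitive_rel R.
Definition is_ranking (R : rel X) := is_proto_ranking R /\ total_rel R.
Definition is_tournament (W : rel X) := total_rel W /\ asymmetric_rel W.

(* histories: sequences of (winner, loser) pairs *)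
Definition history := seq (X * X).

Definition hedge (h : history) : rel X := fun x y => (x, y) \in h.
Definition induced (h : history) : rel X :=
  fun x y => [exists z, hedge h x z && connect (hedge h) z y].

Definition unranked (R : rel X) (p : X * X) : bool :=
  [&& p.1 != p.2, ~~ R p.1 p.2 & ~~ R p.2 p.1].

Definition valid_history (h : history) : Prop :=
  forall i, i < size h ->
    exists p : X * X, nth p h i = p /\
      unranked (induced (take i h)) p /\ ~~ totalb (induced (take i h)).

Definition terminal (h : history) : bool := totalb (induced h).

Definition is_strategy (s : history -> X * X) : Prop :=
  forall h, valid_history h -> ~~ terminal h -> unranked (induced h) (s h).

Definition winner (W : rel X) (p : X * X) : X := if W p.1 p.2 then p.1 else p.2.
Definition loser (W : rel X) (p : X * X) : X := if W p.1 p.2 then p.2 else p.1.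

(* running the interaction (with fuel; #|X|^2 steps always suffice) *)
Fixpoint play (s : history -> X * X) (W : rel X) (fuel : nat) (h : history)
  : history :=
  match fuel with
  | 0 => h
  | f.+1 => if terminal h then h
            else play s W f (rcons h (winner W (s h), loser W (s h)))
  end.

Definition outcome (s : history -> X * X) (W : rel X) : rel X :=
  induced (play s W (#|X| * #|X|) [::]).

Definition rel_eq (R R' : rel X) := forall x y, R x y = R' x y.

Definition feasible (W : rel X) (R : rel X) : Prop :=
  is_ranking R /\ exists s, is_strategy s /\ rel_eq (outcome s W) R.

Definition more_aligned (pref : rel X) (R R' : rel X) : Prop :=
  forall x y, pref x y -> R' x y -> R x y.

Definition unimprovable (pref W : rel X) (R : rel X) : Prop :=
  forall R', feasible W R' -> ~ rel_eq R' R -> ~ more_aligned pref R' R.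

Definition regret_free (pref : rel X) (s : history -> X * X) : Prop :=
  forall W, is_tournament W -> unimprovable pref W (outcome s W).

Definition W_efficient (pref W : rel X) (R : rel X) : Prop :=
  forall x y, pref x y -> W x y -> R x y.

Definition efficient (pref : rel X) (s : history -> X * X) : Prop :=
  forall W, is_tournament W -> W_efficient pref W (outcome s W).

End Chair.

(* Main.v *)
Require Import Defs.
From mathcomp Require Import all_boot.
Set Implicit Arguments. Unset Strict Implicit. Unset Printing Implicit Defensive.

Section Proofs.
Variable X : finType.
Implicit Types (h : history X) (R W : rel X).

Lemma totalbP R : reflect (total_rel R) (totalb R).
Proof.
apply: (iffP forallP) => [H a b nab | H a].
- by have /forallP/(_ b)/implyP := H a; apply.
- apply/forallP => b; apply/implyP; exact: H.
Qed.

Lemma induced_edge h a b : (a, b) \in h -> induced h a b.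
Proof. move=> H; apply/existsP; exists b; by rewrite /hedge H connect0. Qed.

Lemma induced_trans h x y z : induced h x y -> induced h y z -> induced h x z.
Proof.
move=> /existsP[u /andP[hxu cuy]] /existsP[v /andP[hyv cvz]].
apply/existsP; exists u; rewrite hxu /=.
apply: connect_trans cuy _. exact: connect_trans (connect1 hyv) cvz.
Qed.

Lemma induced_min h (Q : rel X) : transitive_rel Q ->
  (forall a b, (a, b) \in h -> Q a b) -> forall a b, induced h a b -> Q a b.
Proof.
move=> Qt Qh a b /existsP[z /andP[haz /connectP[p pth ->]]].
have Qaz := Qh _ _ haz; clear haz.
elim: p z pth Qaz => [|w p IH] z //= /andP[hzw pth] Qaz.
apply: IH pth _. exact: Qt _ _ _ Qaz (Qh _ _ hzw).
Qed.

Lemma induced_rcons h a b x y : induced (rcons h (a, b)) x y ->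
  induced h x y || ((x == a) || induced h x a) && ((b == y) || induced h b y).
Proof.
move=> H.
pose T := fun x y => induced h x y || ((x == a) || induced h x a) && ((b == y) || induced h b y).
apply: (@induced_min (rcons h (a,b)) T _ _ x y H).
- move=> u v w; rewrite /T.
  case/orP=> [Iuv|/andP[Hua Hbv]]; case/orP=> [Ivw|/andP[Hva Hbw]].
  + by rewrite (induced_trans Iuv Ivw).
  + apply/orP; right; rewrite Hbw andbT.
    case/orP: Hva => [/eqP <-|Iva]; first by rewrite Iuv orbT.
    by rewrite (induced_trans Iuv Iva) orbT.
  + apply/orP; right; rewrite Hua /=.
    case/orP: Hbv => [/eqP ->|Ibv]; first by rewrite Ivw orbT.
    by rewrite (induced_trans Ibv Ivw) orbT.
  + by rewrite Hua Hbw orbT.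
- move=> u v; rewrite mem_rcons in_cons => /orP[/eqP[-> ->]|Huv].
  + by rewrite /T !eqxx /= orbT.
  + by rewrite /T induced_edge.
Qed.

Lemma induced_mono h e x y : induced h x y -> induced (rcons h e) x y.
Proof.
apply: induced_min; first exact: induced_trans.
move=> a b H; apply: induced_edge; by rewrite mem_rcons in_cons H orbT.
Qed.

Lemma irr_rcons h a b : irreflexive_rel (induced h) -> a != b ->
  ~~ induced h a b -> ~~ induced h b a ->
  irreflexive_rel (induced (rcons h (a,b))).
Proof.
move=> Hirr nab nIab nIba x; apply/negP => /induced_rcons.
rewrite (negbTE (Hirr x)) /=.
case/andP=> [/orP[/eqP xa|Ixa] /orP[/eqP bx|Ibx]].
- by move: nab; rewrite -xa bx eqxx.
- by move: nIba; rewrite -xa Ibx.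
- by move: nIba; rewrite bx Ixa.
- by move: nIba; rewrite (induced_trans Ibx Ixa).
Qed.

Lemma unranked_wl W I p : unranked I p ->
  [/\ winner W p != loser W p, ~~ I (winner W p) (loser W p)
    & ~~ I (loser W p) (winner W p)].
Proof.
case/and3P => n12 n1 n2; rewrite /winner /loser; case: (W _ _) => //=.
by split => //; rewrite eq_sym.
Qed.

Lemma valid_nil : @valid_history X [::].
Proof. by move=> i. Qed.

Lemma valid_rcons h e : valid_history h -> unranked (induced h) e ->
  ~~ terminal h -> valid_history (rcons h e).
Proof.
move=> Vh Ue Nt i; rewrite size_rcons ltnS leq_eqVlt => /orP[/eqP->|lti].
- exists e; rewrite nth_rcons ltnn eqxx -cats1 take_size_cat //.
- have [p [Hp [Up Tp]]] := Vh i lti.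
  exists p; rewrite nth_rcons lti -cats1 takel_cat ?(ltnW lti) //.
Qed.


Lemma play_prefix s W f h e : e \in h -> e \in play s W f h.
Proof.
elim: f h => [|f IH] h He //=; case: ifP => _ //; apply: IH.
by rewrite mem_rcons in_cons He orbT.
Qed.

Lemma play_edges s W f h a b : total_rel W -> (a,b) \in play s W f h ->
  (a,b) \in h \/ (a != b -> W a b).
Proof.
move=> Wt; elim: f h => [|f IH] h /=; first by left.
case: ifP => _; first by left.
case/IH; last by right.
rewrite mem_rcons in_cons => /orP[/eqP[-> ->]|]; last by left.
right; rewrite /winner /loser; case: ifP => // Wf nab.
by have := Wt _ _ nab; rewrite Wf orbF.
Qed.

Definition cnt h := #|[set p : X * X | induced h p.1 p.2]|.

Lemma cnt_full h : #|X| * #|X| <= cnt h -> terminal h.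
Proof.
move=> Hc.
have Heq : [set p : X * X | induced h p.1 p.2] == setT.
  by rewrite eqEcard subsetT cardsT card_prod.
apply/totalbP => a b _.
have : (a, b) \in [set p : X * X | induced h p.1 p.2] by rewrite (eqP Heq) inE.
by rewrite inE /= => ->.
Qed.

Section Strat.
Variables (s : history X -> X * X) (Hs : is_strategy s) (W : rel X).

Lemma step_props h : valid_history h -> ~~ terminal h ->
  let e := (winner W (s h), loser W (s h)) in
  [/\ valid_history (rcons h e), e.1 != e.2, ~~ induced h e.1 e.2
    & ~~ induced h e.2 e.1].
Proof.
move=> Vh Nt /=.
have U := Hs Vh Nt.
have [n1 n2 n3] := unranked_wl W U.
split => //; apply: valid_rcons => //.
move: U; rewrite /unranked /winner /loser; case: ifP => //= _.
by case/and3P => ? ? ?; rewrite eq_sym; apply/and3P.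
Qed.

Lemma play_valid f h : valid_history h -> valid_history (play s W f h).
Proof.
elim: f h => [|f IH] h Vh //=; case: ifP => Th //.
by apply: IH; have [] := step_props Vh (negbT Th).
Qed.

Lemma play_irr f h : valid_history h -> irreflexive_rel (induced h) ->
  irreflexive_rel (induced (play s W f h)).
Proof.
elim: f h => [|f IH] h Vh Ih //=; case: ifP => Th //.
have [V' n1 n2 n3] := step_props Vh (negbT Th).
apply: IH => //; exact: irr_rcons.
Qed.

Lemma play_term f h : valid_history h -> #|X| * #|X| <= cnt h + f ->
  terminal (play s W f h).
Proof.
elim: f h => [|f IH] h Vh Hc /=; first by apply: cnt_full; rewrite addn0 in Hc.
case: ifP => Th //.
have [V' n1 n2 n3] := step_props Vh (negbT Th).
apply: IH => //; apply: (leq_trans Hc).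
rewrite addnS -addSn leq_add2r; apply: proper_card; apply/properP; split.
- apply/subsetP => p; rewrite !inE; exact: induced_mono.
- exists (winner W (s h), loser W (s h)); rewrite !inE //=.
  by apply: induced_edge; rewrite mem_rcons mem_head.
Qed.

Lemma outcome_ranking : is_ranking (outcome s W).
Proof.
rewrite /outcome; split; first split.
- apply: play_irr; first exact: valid_nil.
  move=> x; apply/negP => /existsP[z /andP[]]; by rewrite /hedge in_nil.
- move=> x y z; exact: induced_trans.
- apply/totalbP; apply: play_term; first exact: valid_nil.
  exact: leq_addl.
Qed.

End Strat.

Lemma play_eq s W1 W2 f h : asymmetric_rel W2 ->
  (forall a b, (a,b) \in play s W1 f h -> a != b -> W2 a b) ->
  play s W1 f h = play s W2 f h.
Proof.
move=> As; elim: f h => [|f IH] h //=; case: ifP => Th // H.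
have He : (winner W1 (s h), loser W1 (s h)) = (winner W2 (s h), loser W2 (s h)).
  have Hm : (winner W1 (s h), loser W1 (s h)) \in play s W1 f (rcons h (winner W1 (s h), loser W1 (s h))).
    by apply: play_prefix; rewrite mem_rcons mem_head.
  move: (H _ _ Hm); case: (s h) => u v.
  rewrite /winner /loser /=; case: (eqVneq u v) => [<- _|nuv]; first by rewrite !if_same.
  case: ifP => W1uv.
  - by move=> /(_ nuv) ->.
  - rewrite eq_sym => /(_ nuv) W2vu.
    by rewrite (negbTE (As _ _ W2vu)).
rewrite -He; apply: IH; exact: H.
Qed.


Lemma pr_asym R a b : is_proto_ranking R -> R a b -> ~~ R b a.
Proof.
case=> Ir Tr Rab; apply/negP => Rba; by have := Ir a; rewrite (Tr _ _ _ Rab Rba).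
Qed.

Lemma pr_neq R a b : is_proto_ranking R -> R a b -> a != b.
Proof. by case=> Ir _ Rab; apply/eqP => eab; move: (Ir a); rewrite {2}eab Rab. Qed.

Section Construct.
Variables (pref R : rel X) (x y : X).
Hypotheses (Hp : is_ranking pref) (HR : is_ranking R) (Ryx : R y x) (pxy : pref x y).

Definition F a := (a == x) || R a y || (R a x && pref a x).
Definition R' a b := if F a == F b then R a b else F a.
Definition W' a b := if (a == x) && (b == y) then true
                     else if (a == y) && (b == x) then false else R a b.

Let HRp : is_proto_ranking R := HR.1.
Let Hpp : is_proto_ranking pref := Hp.1.
Let Rt : transitive_rel R := HRp.2.
Let Ri : irreflexive_rel R := HRp.1.
Let Rtot : total_rel R := HR.2.

Lemma Fx : F x. Proof. by rewrite /F eqxx. Qed.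
Lemma Fy : F y = false.
Proof.
rewrite /F (negbTE (Ri y)) orbF.
have nyx : (y == x) = false by apply/negbTE; exact: pr_neq HRp Ryx.
by rewrite nyx /= (negbTE (pr_asym Hpp pxy)) andbF.
Qed.
Lemma nxy : x != y. Proof. by rewrite eq_sym; exact: pr_neq HRp Ryx. Qed.

Lemma R'_ranking : is_ranking R'.
Proof.
split; first split.
- by move=> a; rewrite /R' eqxx Ri.
- move=> a b c; rewrite /R'.
  case Fa: (F a); case Fb: (F b); case Fc: (F c) => //=; exact: Rt.
- move=> a b nab; rewrite /R'.
  case Fa: (F a); case Fb: (F b) => //=; exact: Rtot.
Qed.

Lemma R'_aligned : more_aligned pref R' R.
Proof.
move=> a b pab Rab; rewrite /R' Rab.
case Fa: (F a); case Fb: (F b) => //=.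
move: Fa Fb; rewrite /F.
case: (eqVneq a x) => [->|nax] //=.
case: (eqVneq b x) => [ebx|nbx] /=.
- subst b => H _; move: H; by rewrite Rab pab orbT.
- case Rby: (R b y) => /=.
  + by rewrite (Rt Rab Rby).
  + move=> H /andP[Rbx pbx]; move: H.
    by rewrite (Rt Rab Rbx) (Hpp.2 _ _ _ pab pbx) orbT.
Qed.

Lemma R'_neq : ~ rel_eq R' R.
Proof.
rewrite /rel_eq => /(_ x y); rewrite /R' Fx Fy /= => Rxy.
by have := pr_asym HRp Ryx; rewrite -Rxy.
Qed.

Lemma W'_tournament : is_tournament W'.
Proof.
have nyx : y != x by rewrite eq_sym nxy.
have Hc : forall a, (a == x) -> (a == y) -> False.
  by move=> a /eqP-> /eqP exy; move: nxy; rewrite exy eqxx.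
split.
- move=> a b nab; rewrite /W'; case ax: (a == x); case by_: (b == y);
  case ay: (a == y); case bx: (b == x) => //=; try exact: Rtot;
  try by case: (Hc a). all: try by case: (Hc b).
- move=> a b; rewrite /W'; case ax: (a == x); case by_: (b == y);
  case ay: (a == y); case bx: (b == x) => //=; try exact: pr_asym;
  try by case: (Hc a). all: try by case: (Hc b).
Qed.

Lemma R'_cover (I : rel X) : transitive_rel I ->
  (forall a b, R' a b -> W' a b -> I a b) -> forall a b, R' a b -> I a b.
Proof.
move=> It E a b; rewrite {1}/R'.
have nyx : y != x by rewrite eq_sym nxy.
case: (eqVneq (F a) (F b)) => [eF|nF].
- rewrite /= => Rab; apply: E; first by rewrite /R' eF eqxx.
  rewrite /W'; case: ifP => [/andP[/eqP ea /eqP eb]|_].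
    by move: eF; rewrite ea eb Fx Fy.
  case: ifP => [/andP[/eqP ea /eqP eb]|_] //.
  by move: eF; rewrite ea eb Fx Fy.
- rewrite /= => Fa.
  have Fb : F b = false by move: nF; rewrite Fa; case: (F b).
  have Iax : a = x \/ I a x.
    case: (eqVneq a x) => [->|nax]; [by left|right]; apply: E.
    + rewrite /R' Fa Fx /=; move: Fa; rewrite /F (negbTE nax) /=.
      by case/orP=> [Ray|/andP[Rax _]] //; exact: Rt Ray Ryx.
    + have nay : a != y by apply: contraTneq Fa => ->; rewrite Fy.
      rewrite /W' (negbTE nax) (negbTE nay) /=.
      move: Fa; rewrite /F (negbTE nax) /=.
      by case/orP=> [Ray|/andP[Rax _]] //; exact: Rt Ray Ryx.
  have Ixy : I x y by apply: E; [rewrite /R' Fx Fy | rewrite /W' !eqxx].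
  have Iyb : b = y \/ I y b.
    case: (eqVneq b y) => [->|nby]; [by left|right].
    have Ryb : R y b.
      move: Fb; rewrite /F => /norP[/norP[_ nRby] _].
      by have := Rtot (y:=b) (x:=y); rewrite eq_sym nby (negbTE nRby) orbF; apply.
    apply: E; first by rewrite /R' Fy Fb.
    have nbx : b != x by apply: contraFneq Fb => ->; rewrite Fx.
    by rewrite /W' (negbTE nyx) eqxx (negbTE nbx).
  case: Iax => [->|Iax]; case: Iyb => [->|Iyb] //.
  + exact: It Ixy Iyb.
  + exact: It Iax Ixy.
  + exact: It (It _ _ _ Iax Ixy) Iyb.
Qed.

Lemma R'_pr : is_proto_ranking R'. Proof. exact: R'_ranking.1. Qed.

Section Feas.
Variables (s : history X -> X * X) (Hs : is_strategy s).

Definition s' (h : history X) : X * X :=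
  if [pick p : X * X | unranked (induced h) p && R' p.1 p.2 && W' p.1 p.2] is Some p
  then p else s h.

Lemma s'_strategy : is_strategy s'.
Proof.
move=> h Vh Nt; rewrite /s'; case: pickP => [p /andP[/andP[U _] _] //|_].
exact: Hs.
Qed.

Lemma s'_inv f h : (forall a b, (a,b) \in h -> R' a b) ->
  forall a b, (a,b) \in play s' W' f h -> R' a b.
Proof.
elim: f h => [|f IH] h Hh //=; case: ifP => Th //; apply: IH.
have Isub : forall a b, induced h a b -> R' a b.
  by apply: induced_min => //; exact: R'_pr.2.
move=> a b; rewrite mem_rcons in_cons => /orP[|]; last exact: Hh.
rewrite /s'; case: pickP => [p /andP[/andP[U R'p] W'p] | Hn].
  by rewrite /winner /loser W'p => /eqP[-> ->].
have Hcov : forall u v, R' u v -> induced h u v.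
  apply: R'_cover; first by move=> u v w; exact: induced_trans.
  move=> u v Ruv Wuv; have := Hn (u, v).
  rewrite /= Ruv Wuv !andbT /unranked /= (pr_neq R'_pr Ruv) /=. move/negbT; rewrite negb_and !negbK.
  case/orP => // Ivu; exfalso.
  by move: (pr_asym R'_pr Ruv); rewrite (Isub _ _ Ivu).
suff : terminal h by rewrite Th.
apply/totalbP => u v nuv; case/orP: (R'_ranking.2 _ _ nuv) => H.
- by rewrite Hcov.
- by rewrite (Hcov _ _ H) orbT.
Qed.

Lemma R'_feasible : feasible W' R'.
Proof.
split; first exact: R'_ranking.
exists s'; split; first exact: s'_strategy.
move=> a b; rewrite /outcome.
set hf := play s' W' _ [::].
have Isub : forall a b, induced hf a b -> R' a b.
  apply: induced_min; first exact: R'_pr.2.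
  by apply: s'_inv.
have Term : terminal hf.
  apply: play_term; [exact: s'_strategy | exact: valid_nil | exact: leq_addl].
apply/idP/idP; first exact: Isub.
move=> Rab; have nab := pr_neq R'_pr Rab.
case/orP: (totalbP _ Term _ _ nab) => // Iba.
by move: (pr_asym R'_pr Rab); rewrite (Isub _ _ Iba).
Qed.

End Feas.

End Construct.

End Proofs.

Theorem theorem2 (X : finType) (pref : rel X) (s : history X -> X * X) :
  is_ranking pref -> is_strategy s ->
  (regret_free pref s <-> efficient pref s).
Proof.
move=> Hp Hs; split.
- move=> RF W [Wt Wa] x y pxy Wxy.
  pose R := outcome s W.
  have HR : is_ranking R := outcome_ranking Hs W.
  case Rxy: (outcome s W x y) => //; have nRxy : ~~ R x y by rewrite /R Rxy.
  have nxy : x != y by apply: contraTneq pxy => ->; exact: Hp.1.1.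
  have Ryx : R y x by case/orP: (HR.2 _ _ nxy) => //; rewrite (negbTE nRxy).
  have Heq : outcome s (W' R x y) = R.
    rewrite /outcome /R /outcome; congr induced; symmetry; apply: play_eq.
    - exact: (W'_tournament HR Ryx).2.
    - move=> a b Hab nab.
      have Rab : R a b by apply: induced_edge.
      case: (play_edges Wt Hab) => [//|/(_ nab) Wab].
      rewrite /W'; case: ifP => // _; case: ifP => [/andP[/eqP ea /eqP eb]|_] //.
      by move: (Wa _ _ Wab); rewrite ea eb Wxy.
  have := RF _ (W'_tournament HR Ryx); rewrite Heq.
  move/(_ _ (R'_feasible Hp HR Ryx pxy Hs) (R'_neq Hp HR Ryx pxy)).
  by move/(_ (R'_aligned x y Hp HR)).
- move=> Eff W HW R' [HR' [s2 [Hs2 Heq]]] Hneq Hal.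
  pose R := outcome s W.
  have HR : is_ranking R := outcome_ranking Hs W.
  have [x0 [y0 /andP[R'xy nRxy]]] : exists x0 y0, R' x0 y0 && ~~ R x0 y0.
    case: (boolP [forall a, [forall b, R' a b == R a b]]) => [/forallP H|].
      by exfalso; apply: Hneq => a b; apply/eqP: (forallP (H a) b).
    move=> /forallPn[a /forallPn[b]].
    case Rab': (R' a b); case Rab: (R a b) => //= _.
    + by exists a, b; rewrite Rab' Rab.
    + have nab := pr_neq HR.1 Rab.
      exists b, a; apply/andP; split.
      * by case/orP: (HR'.2 _ _ nab) => //; rewrite Rab'.
      * exact: pr_asym HR.1 Rab.
  pose hf := play s2 W (#|X| * #|X|) [::].
  have [a [b [hab nRab]]] : exists a b, (a, b) \in hf /\ ~~ R a b.
    case: (boolP [forall a, [forall b, ((a,b) \in hf) ==> R a b]]) => [/forallP H|].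
      exfalso; move: nRxy; rewrite -Heq in R'xy.
      rewrite (@induced_min _ hf R HR.1.2 _ _ _ R'xy) //.
      by move=> a b hab; exact: (implyP (forallP (H a) b) hab).
    move=> /forallPn[a /forallPn[b]]; rewrite negb_imply => /andP[hab nRab].
    by exists a, b.
  have R'ab : R' a b by rewrite -Heq; apply: induced_edge.
  have nab := pr_neq HR'.1 R'ab.
  have Wab : W a b by case: (play_edges HW.1 hab) => [//|]; apply.
  have Rba : R b a by case/orP: (HR.2 _ _ nab) => //; rewrite (negbTE nRab).
  case/orP: (Hp.2 _ _ nab) => pab.
  + by move: nRab; rewrite /R (Eff W HW a b pab Wab).
  + by move: (pr_asym HR'.1 R'ab); rewrite (Hal b a pab Rba).
Qed.
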